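(* Every efficiently structured polyomino is crystallized.
   Context: A polyomino is a finite union of closed unit squares (tiles) of the square lattice, any two meeting (if at all) in a whole edge, whose interior is connected. Its holes are the bounded connected components of its complement in the plane; $h(A)$ is the number of holes and $|A|$ the number of tiles. The area of a hole is the number of unit squares needed to fill it. For $h\ge1$, $g(h)=\min\{|A|: h(A)=h\}$, and a polyomino with $h$ holes is crystallized if it has $g(h)$ tiles. The dual graph of $A$ has a vertex for each tile and an edge between two tiles sharing an edge; $A$ is acyclic if its dual graph is a tree. The perimeter of $A$ consists of the unit edges on its topological boundary; those bounding a hole form the hole perimeter, the others the outer perimeter, whose number of edges is $p_o(A)$. A polyomino with $n$ tiles and $h$ holes has minimal outer perimeter if $p_o(A)=2\lceil 2\sqrt{n+h}\,\rceil$. A polyomino is efficiently structured if it is acyclic, each of its holes has area one, and it has minimal outer perimeter. *)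

(* Defs.v *)
From HB Require Import structures.
From mathcomp Require Import all_boot all_order all_algebra.
From mathcomp Require Import finmap.
Set Implicit Arguments. Unset Strict Implicit. Unset Printing Implicit Defensive.
Import Order.TTheory GRing.Theory Num.Theory.
Local Open Scope fset_scope.

(* A cell (i,j) : int*int denotes the closed unit square [i,i+1]x[j,j+1]. *)
Definition cell := (int * int)%type.

Definition adj (c d : cell) : bool :=
  ((c.1 == d.1) && (absz (c.2 - d.2) == 1%N)) ||
  ((c.2 == d.2) && (absz (c.1 - d.1) == 1%N)).

Definition reach_in (P : cell -> Prop) (x y : cell) : Prop :=
  exists s : seq cell, [/\ path adj x s, last x s = y & forall z, z \in x :: s -> P z].

(* A polyomino is given by its finite nonempty set of tiles; its interior is
   connected iff its dual graph (edge-adjacency of tiles) is connected. *)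
Definition polyomino (A : {fset cell}) : Prop :=
  A != fset0 /\ forall x y, x \in A -> y \in A -> reach_in (fun z => z \in A) x y.

(* Connectivity in the complement of A (components of the plane minus A are
   the edge-connected classes of non-tile cells). *)
Definition creach (A : {fset cell}) (x y : cell) : Prop :=
  reach_in (fun z => z \notin A) x y.

(* A hole: a bounded (= finite) connected component of the complement. *)
Definition is_hole (A : {fset cell}) (H : {fset cell}) : Prop :=
  exists2 x, x \in H & x \notin A /\ forall y, creach A x y <-> y \in H.

Definition num_holes (A : {fset cell}) (k : nat) : Prop :=
  exists s : seq {fset cell},
    [/\ uniq s, forall H, H \in s <-> is_hole A H & size s = k].

Definition ntiles (A : {fset cell}) : nat := #|` A|.

Definition acyclic (A : {fset cell}) : Prop :=
  ~ exists s : seq cell,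
      [/\ (3 <= size s)%N, uniq s, all (fun z => z \in A) s & cycle adj s].

Definition outer_cell (A : {fset cell}) (d : cell) : Prop :=
  d \notin A /\
  ~ exists N : nat, forall y, creach A d y -> (absz y.1 <= N)%N /\ (absz y.2 <= N)%N.

(* A unit edge of the outer perimeter, encoded by the ordered pair (tile,
   outer non-tile cell) of the two cells it separates. *)
Definition outer_edge (A : {fset cell}) (e : cell * cell) : Prop :=
  [/\ e.1 \in A, adj e.1 e.2 & outer_cell A e.2].

Definition outer_perim (A : {fset cell}) (p : nat) : Prop :=
  exists E : {fset (cell * cell)}, (forall e, e \in E <-> outer_edge A e) /\ #|` E| = p.

(* ceil(2 * sqrt m) = least k with (2 sqrt m) <= k, i.e. 4m <= k^2;
   the search range 0..2m+1 suffices since (2m+1)^2 >= 4m. *)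
Definition ceil_2sqrt (m : nat) : nat :=
  find (fun k => (4 * m <= k * k)%N) (iota 0 (2 * m + 2)).

Definition min_outer_perim (A : {fset cell}) (h : nat) : Prop :=
  outer_perim A (2 * ceil_2sqrt (ntiles A + h)).

Definition efficiently_structured (A : {fset cell}) (h : nat) : Prop :=
  [/\ acyclic A, forall H, is_hole A H -> #|` H| = 1%N & min_outer_perim A h].

Definition crystallized (A : {fset cell}) (h : nat) : Prop :=
  forall B, polyomino B -> num_holes B h -> (ntiles A <= ntiles B)%N.

(* Main.v *)
Require Import Defs.
From mathcomp Require Import all_boot all_order all_algebra finmap.
From mathcomp Require Import zify.
From Stdlib Require Import ClassicalEpsilon Classical.
Set Implicit Arguments. Unset Strict Implicit. Unset Printing Implicit Defensive.
Import Order.TTheory GRing.Theory Num.Theory.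
Local Open Scope fset_scope.

Definition nbrs (x : cell) : seq cell :=
  [:: (x.1 + 1, x.2)%R; (x.1 - 1, x.2)%R; (x.1, x.2 + 1)%R; (x.1, x.2 - 1)%R].

Lemma adjE x y : adj x y = (y \in nbrs x).
Proof.
case: x y => [a b] [c d]; rewrite /adj /nbrs !inE /= !xpair_eqE.
apply/idP/idP.
- case/orP=> /andP[/eqP E1 /eqP E2]; apply/orP; lia.
- move=> H; apply/orP; lia.
Qed.

Lemma adj_sym x y : adj x y = adj y x.
Proof. rewrite /adj; apply/idP/idP => /orP H; apply/orP; lia. Qed.

Lemma adj_irr x : adj x x = false.
Proof. rewrite /adj; apply/negbTE/negP => /orP H; lia. Qed.

Lemma nbrs_uniq x : uniq (nbrs x).
Proof. case: x => a b; rewrite /nbrs /= !inE !xpair_eqE /=. apply/and4P; split => //; apply/negP; lia. Qed.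

Definition L (S : seq cell) : seq (cell * cell) := [seq (x, y) | x <- S, y <- nbrs x].

Lemma memL S p : (p \in L S) = (p.1 \in S) && adj p.1 p.2.
Proof.
case: p => x y /=; rewrite adjE; apply/allpairsPdep/andP => [[x' [y' [H1 H2 [-> ->]]]]|[H1 H2]] //.
by exists x, y.
Qed.

Lemma sizeL S : size (L S) = 4 * size S.
Proof.
rewrite size_allpairs_dep; elim: S => //= x s ->; lia.
Qed.

Lemma uniqL S : uniq S -> uniq (L S).
Proof.
move=> uS; apply: allpairs_uniq_dep => //; first by move=> x _; exact: nbrs_uniq.
by move=> [x1 y1] [x2 y2] _ _ /= [E1]; subst x2 => /= ->.
Qed.

Lemma count_key (T K : eqType) (s : seq T) (P : pred T) (key : T -> K) (X : seq K) :
  uniq X -> (forall k, k \in X -> exists p, [/\ p \in s, P p & key p = k]) ->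
  (size X <= count P s)%N.
Proof.
move=> uX HX; apply: (@leq_trans (size (undup (map key (filter P s))))).
  apply: uniq_leq_size => // k /HX [p [ps Pp <-]].
  by rewrite mem_undup; apply: map_f; rewrite mem_filter Pp.
by rewrite (leq_trans (size_undup _)) // size_map size_filter.
Qed.

Lemma count3 (T : Type) (a b c : pred T) (s : seq T) :
  (forall x, ~~ (a x && b x)) -> (forall x, ~~ (a x && c x)) -> (forall x, ~~ (b x && c x)) ->
  (count a s + count b s + count c s <= size s)%N.
Proof.
move=> ab ac bc; elim: s => //= x s IH.
move: (ab x) (ac x) (bc x); case: (a x); case: (b x); case: (c x) => //= _ _ _; lia.
Qed.

Lemma mem_body (T : eqType) (x y : T) s : y \in s -> y \in x :: s.
Proof. by rewrite inE => ->; rewrite orbT. Qed.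

Lemma count_sub2 (T : eqType) (a b c : pred T) (s : seq T) :
  (forall x, x \in s -> a x -> b x || c x) ->
  (count a s <= count b s + count c s)%N.
Proof.
elim: s => //= x s IH H.
have IH' := IH (fun y ys => H y (mem_body x ys)).
have := H x (mem_head _ _); case: (a x); case: (b x); case: (c x) => //= H'; try lia.
Qed.

Lemma count_mem_fset (T : choiceType) (E : {fset T}) s :
  uniq s -> (count (mem E) s <= #|` E|)%N.
Proof.
move=> us; rewrite -size_filter; apply: uniq_leq_size; first exact: filter_uniq.
by move=> x; rewrite mem_filter => /andP[].
Qed.

Definition pb (P : Prop) : bool := if excluded_middle_informative P then true else false.
Lemma pbP (P : Prop) : reflect P (pb P).
Proof. rewrite /pb; case: excluded_middle_informative => H; by constructor. Qed.

Lemma reach_refl P x : P x -> reach_in P x x.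
Proof. by move=> Px; exists [::]; split => // z; rewrite inE => /eqP ->. Qed.

Lemma reach_rcons P x y z : reach_in P x y -> adj y z -> P z -> reach_in P x z.
Proof.
case=> s [ps ls Ps] ayz Pz; exists (rcons s z); split.
- by rewrite rcons_path ps ls.
- by rewrite last_rcons.
- move=> w; rewrite -rcons_cons mem_rcons inE => /orP[/eqP ->//|]; exact: Ps.
Qed.

Lemma reach_sym P x y : reach_in P x y -> reach_in P y x.
Proof.
case=> s [ps ls Ps]; exists (rev (belast x s)); split.
- rewrite -ls rev_path; rewrite (@eq_path _ _ adj) // => u v /=; exact: adj_sym.
- rewrite -ls; case: s {ps ls Ps} => //= a s; rewrite rev_cons last_rcons //.
- move=> z; rewrite -ls => zi; apply: Ps.
  by rewrite lastI -mem_rev rev_rcons.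
Qed.

Lemma reach_trans P x y z : reach_in P x y -> reach_in P y z -> reach_in P x z.
Proof.
case=> s [ps ls Ps] [t [pt lt Pt]]; exists (s ++ t); split.
- by rewrite cat_path ps ls.
- by rewrite last_cat ls.
- move=> w; rewrite -cat_cons mem_cat => /orP[]; first exact: Ps.
  by move=> wt; apply: Pt; rewrite inE wt orbT.
Qed.

Lemma reach_last P x y : reach_in P x y -> P y.
Proof. by case=> s [_ <- Ps]; apply: Ps; exact: mem_last. Qed.

Lemma hole_notin S H z : is_hole S H -> z \in H -> z \notin S.
Proof. by case=> x xH [xS HH] /HH; exact: reach_last. Qed.

Lemma hole_closed S H z z' : is_hole S H -> z \in H -> adj z z' -> z' \notin S -> z' \in H.
Proof.
case=> x xH [xS HH] zH a z'S; apply/HH; apply: reach_rcons a z'S.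
exact/HH.
Qed.

Lemma hole_eq S H1 H2 z : is_hole S H1 -> is_hole S H2 -> z \in H1 -> z \in H2 -> H1 = H2.
Proof.
case=> x1 x1H [x1S HH1] [x2 x2H [x2S HH2]] z1 z2; apply/fsetP => y.
have c1 := proj2 (HH1 z) z1; have c2 := proj2 (HH2 z) z2.
apply/idP/idP => yH.
- apply/HH2; apply: reach_trans (c2) _; apply: reach_trans (reach_sym c1) _; exact/HH1.
- apply/HH1; apply: reach_trans (c1) _; apply: reach_trans (reach_sym c2) _; exact/HH2.
Qed.

Definition HU (s : seq {fset cell}) : {fset cell} := foldr (fun H acc => H `|` acc) fset0 s.

Lemma memHU s z : (z \in HU s) = has (fun H : {fset cell} => z \in H) s.
Proof. by elim: s => //= H s IH; rewrite in_fsetU IH. Qed.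

Lemma card_HU_ge S s : (forall H, H \in s -> is_hole S H) -> uniq s -> (size s <= #|` HU s|)%N.
Proof.
elim: s => //= H s IH hs /andP[Hs us].
have hH := hs H (mem_head _ _).
have IH' := IH (fun H' H's => hs H' (mem_body H H's)) us.
have E0 : H `&` HU s = fset0.
  apply/fsetP => z; rewrite in_fsetI in_fset0 memHU; apply/negbTE/negP => /andP[zH /seq.hasP[H' H's zH']].
  have E := hole_eq hH (hs H' (mem_body H H's)) zH zH'.
  by move: Hs; rewrite E H's.
have := cardfsUI H (HU s); rewrite E0 cardfs0 addn0 => ->.
case: hH => x xH _; have : (0 < #|` H|)%N by rewrite cardfs_gt0; apply/fset0Pn; exists x.
move=> pos; rewrite -add1n; exact: leq_add.
Qed.

Lemma card_HU_le s : (#|` HU s| <= sumn [seq #|` H| | H <- s])%N.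
Proof.
elim: s => [|H s IH] /=; first by [].
have := cardfsUI H (HU s). move=> E. apply: leq_trans (leq_add (leqnn _) IH). by rewrite -E leq_addr.
Qed.

Definition holeof (s : seq {fset cell}) (y : cell) := nth fset0 s (find (fun H : {fset cell} => y \in H) s).

Lemma holeofE S s H y : (forall H, H \in s -> is_hole S H) -> H \in s -> y \in H -> holeof s y = H.
Proof.
move=> hs Hs yH.
have hy : has (fun H : {fset cell} => y \in H) s by apply/seq.hasP; exists H.
have := nth_find fset0 hy; rewrite -/(holeof s y) => yH'.
have Hs' : holeof s y \in s by rewrite /holeof mem_nth // -has_find.
exact: hole_eq (hs _ Hs') (hs _ Hs) yH' yH.
Qed.

Lemma exists_max_seq (s : seq cell) (f : cell -> int) : s != [::] ->
  exists2 z, z \in s & forall w, w \in s -> (f w <= f z)%R.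
Proof.
elim: s => // x s IH _; case: s IH => [|y s] IH.
  by exists x; rewrite ?inE // => w; rewrite inE => /eqP ->.
have [z zs zm] := IH isT.
have [le|lt] := lerP (f x) (f z).
  exists z; first by rewrite inE zs orbT.
  by move=> w; rewrite inE => /orP[/eqP ->//|]; exact: zm.
exists x; first exact: mem_head.
move=> w; rewrite inE => /orP[/eqP ->//|/zm le1]; exact: le_trans le1 (ltW lt).
Qed.

Lemma exists_max (H : {fset cell}) (f : cell -> int) : H != fset0 ->
  exists2 z, z \in H & forall w, w \in H -> (f w <= f z)%R.
Proof.
move=> /fset0Pn [x xH]; apply: exists_max_seq.
move: xH; change (x \in enum_fset H -> enum_fset H != [::]); by case: (enum_fset H).
Qed.

Definition dirs : seq (int * int) := [:: (1, 0); (-1, 0); (0, 1); (0, -1)]%R.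
Definition shift (z : cell) (d : int * int) : cell := (z.1 + d.1, z.2 + d.2)%R.
Definition dot (d : int * int) (z : cell) : int := (d.1 * z.1 + d.2 * z.2)%R.

Lemma dirs_uniq : uniq dirs. Proof. by []. Qed.

Lemma shift_nbrs z d : d \in dirs -> shift z d \in nbrs z.
Proof.
case: z => a b; rewrite /dirs /shift /nbrs !inE => /or4P[]/eqP-> /=; rewrite !xpair_eqE;
  apply/or4P; [constructor 1|constructor 2|constructor 3|constructor 4]; apply/andP; split; apply/eqP; lia.
Qed.

Lemma shift_dot z d : d \in dirs -> dot d (shift z d) = (dot d z + 1)%R.
Proof. case: z => a b; rewrite /dirs /shift /dot !inE => /or4P[]/eqP-> /=; lia. Qed.

Lemma shift_diff z d : ((shift z d).1 - z.1, (shift z d).2 - z.2)%R = d.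
Proof. case: z d => a b [c e]; rewrite /shift /=; congr pair; lia. Qed.

Definition reachk (S : {fset cell}) r v k := exists s : seq cell,
  [/\ path adj r s, last r s = v, forall z, z \in r :: s -> z \in S & size s = k].

Definition D (S : {fset cell}) r v : nat :=
  match excluded_middle_informative (exists k, pb (reachk S r v k)) with
  | left e => ex_minn e | right _ => 0%N end.

Lemma D_spec S r v : (exists k, reachk S r v k) ->
  reachk S r v (D S r v) /\ forall k, reachk S r v k -> (D S r v <= k)%N.
Proof.
move=> [k0 Hk0]; rewrite /D; case: excluded_middle_informative => [e|ne]; last first.
  by exfalso; apply: ne; exists k0; apply/pbP.
case: ex_minnP => m /pbP Hm Hmin; split => // k Hk; apply: Hmin; exact/pbP.
Qed.

Section Dist.
Variables (S : {fset cell}) (r : cell).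
Hypothesis rS : r \in S.
Hypothesis conn : forall x y, x \in S -> y \in S -> reach_in (fun z => z \in S) x y.

Lemma reachk_ex v : v \in S -> exists k, reachk S r v k.
Proof. by move=> vS; case: (conn rS vS) => s [ps ls Ps]; exists (size s), s. Qed.

Lemma D_le v k : v \in S -> reachk S r v k -> (D S r v <= k)%N.
Proof. by move=> vS; apply: (proj2 (D_spec (reachk_ex vS))). Qed.

Lemma D_r : D S r r = 0%N.
Proof. apply/eqP; rewrite -leqn0; apply: D_le => //; exists [::]; split => // z; rewrite inE => /eqP ->; exact: rS. Qed.

Lemma D_adj u v : u \in S -> v \in S -> adj u v -> (D S r v <= D S r u + 1)%N.
Proof.
move=> uS vS a; apply: D_le => //.
have [[s [ps ls Ps ss]] _] := D_spec (reachk_ex uS).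
exists (rcons s v); split.
- by rewrite rcons_path ps ls.
- by rewrite last_rcons.
- move=> z; rewrite -rcons_cons mem_rcons inE => /orP[/eqP ->//|]; exact: Ps.
- by rewrite size_rcons ss addn1.
Qed.

Lemma D_par v : v \in S -> v != r -> exists u, [/\ u \in S, adj u v & D S r u + 1 = D S r v]%N.
Proof.
move=> vS vr; have [[s [ps ls Ps ss]] _] := D_spec (reachk_ex vS).
case/lastP: s ps ls Ps ss => [|s' v'] ps ls Ps ss.
  by move: vr; rewrite -ls eqxx.
rewrite last_rcons in ls; subst v'.
move: ps; rewrite rcons_path => /andP[ps a].
have uS : last r s' \in S by apply: Ps; rewrite -rcons_cons mem_rcons inE mem_last orbT.
exists (last r s'); split => //.
have h1 : (D S r (last r s') <= size s')%N.
  apply: D_le => //; exists s'; split => // z zi; apply: Ps.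
  by rewrite -rcons_cons mem_rcons inE zi orbT.
have h2 := D_adj uS vS a.
rewrite size_rcons in ss; lia.
Qed.

Lemma D_zero v : v \in S -> D S r v = 0%N -> v = r.
Proof.
move=> vS E; have [[s [ps ls Ps ss]] _] := D_spec (reachk_ex vS).
by rewrite E in ss; move: ls; rewrite (size0nil ss) /= => <-.
Qed.

End Dist.

Definition Eo (S : {fset cell}) := count (fun p => p.2 \in S) (L S).

Lemma count_le3 (T : eqType) (a b c d : pred T) (s : seq T) :
  (forall x, a x -> d x) -> (forall x, b x -> d x) -> (forall x, c x -> d x) ->
  (forall x, ~~ (a x && b x)) -> (forall x, ~~ (a x && c x)) -> (forall x, ~~ (b x && c x)) ->
  (count a s + count b s + count c s <= count d s)%N.
Proof.
move=> ad bd cd ab ac bc; elim: s => //= x s IH.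
move: (ad x) (bd x) (cd x) (ab x) (ac x) (bc x).
case: (a x); case: (b x); case: (c x); case: (d x) => //= H1 H2 H3 _ _ _; try lia;
  try (by have := H1 erefl); try (by have := H2 erefl); try (by have := H3 erefl).
Qed.

Ltac clean_hyps := repeat match goal with
  | H : is_true (adj _ _) |- _ => clear H
  | H : is_true (_ \in _) |- _ => clear H
  | H : is_true (?a != _) |- _ => let T := type of a in
        lazymatch T with nat => fail | _ => clear H end
  end.
Ltac lia' := clean_hyps; lia.

Section EoLow.
Variables (S : {fset cell}) (r : cell).
Hypothesis rS : r \in S.
Hypothesis conn : forall x y, x \in S -> y \in S -> reach_in (fun z => z \in S) x y.

Let Dn := fun p : cell * cell => (p.2 \in S) && (D S r p.1 == D S r p.2 + 1)%N.
Let Up := fun p : cell * cell => (p.2 \in S) && (D S r p.2 == D S r p.1 + 1)%N.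
Let Eq := fun p : cell * cell => (p.2 \in S) && (D S r p.1 == D S r p.2)%N.

Lemma cardS1 : #|` S| = (#|` S `\ r|).+1.
Proof. by rewrite (cardfsD1 r S) rS. Qed.

Lemma sum3 : (count Dn (L S) + count Up (L S) + count Eq (L S) <= Eo S)%N.
Proof.
apply: count_le3; rewrite /Dn /Up /Eq.
- by move=> p /andP[].
- by move=> p /andP[].
- by move=> p /andP[].
- move=> p; apply/negP => /andP[/andP[_ /eqP E1] /andP[_ /eqP E2]]; lia.
- move=> p; apply/negP => /andP[/andP[_ /eqP E1] /andP[_ /eqP E2]]; lia.
- move=> p; apply/negP => /andP[/andP[_ /eqP E1] /andP[_ /eqP E2]]; lia.
Qed.

Lemma countUp : (#|` S `\ r| <= count Up (L S))%N.
Proof.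
apply: (@count_key _ _ _ _ snd) => [|k]; first exact: fset_uniq.
rewrite in_fsetD1 => /andP[kr kS].
have [u [uS a E]] := D_par rS conn kS kr.
exists (u, k); split => //; first by rewrite memL /= uS a.
by rewrite /Up /= kS E eqxx.
Qed.

Lemma countDn : (#|` S `\ r| <= count Dn (L S))%N.
Proof.
apply: (@count_key _ _ _ _ fst) => [|k]; first exact: fset_uniq.
rewrite in_fsetD1 => /andP[kr kS].
have [u [uS a E]] := D_par rS conn kS kr.
exists (k, u); split => //; first by rewrite memL /= kS adj_sym a.
by rewrite /Dn /= uS E eqxx.
Qed.

Lemma Eo_conn : (#|` S| + #|` S| <= Eo S + 2)%N.
Proof. have := sum3; have := countUp; have := countDn; rewrite cardS1; lia. Qed.

Lemma Eo_ring (R : {fset cell}) : (forall z, z \in R -> z \in S) -> R != fset0 ->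
  (forall v, v \in R -> exists u w, [/\ u \in R, w \in R, adj v u, adj v w & u != w]) ->
  (#|` S| + #|` S| <= Eo S + 1)%N.
Proof.
move=> RS Rn two.
have [v vR vmax] := exists_max (fun z => Posz (D S r z)) Rn.
have [u [w [uR wR avu avw uw]]] := two v vR.
have vS := RS v vR; have uS := RS u uR; have wS := RS w wR.
have hu : (D S r u <= D S r v)%N by have := vmax u uR; rewrite lez_nat.
have hw : (D S r w <= D S r v)%N by have := vmax w wR; rewrite lez_nat.
have hu' := D_adj rS conn uS vS (etrans (adj_sym _ _) avu).
have hw' := D_adj rS conn wS vS (etrans (adj_sym _ _) avw).
have s3 := sum3; have cu := countUp; have cd := countDn; rewrite cardS1.
have [Eu|Nu] := eqVneq (D S r u) (D S r v).
  have : (1 <= count Eq (L S))%N.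
    by rewrite -has_count; apply/hasP; exists (v, u); rewrite ?memL /= ?vS ?avu // /Eq /= uS Eu eqxx.
  lia'.
have [Ew|Nw] := eqVneq (D S r w) (D S r v).
  have : (1 <= count Eq (L S))%N.
    by rewrite -has_count; apply/hasP; exists (v, w); rewrite ?memL /= ?vS ?avw // /Eq /= wS Ew eqxx.
  lia'.
have Du : (D S r v = D S r u + 1)%N by lia'.
have Dw : (D S r v = D S r w + 1)%N by lia'.
have vr : v != r by apply/eqP => E; move: Du; rewrite E D_r //; lia'.
have : ((#|` S `\ r|).+1 <= count Dn (L S))%N.
  pose key := fun p : cell * cell => if p == (v, w) then None else Some p.1.
  pose X := None :: map Some (enum_fset (S `\ r)).
  have -> : (#|` S `\ r|).+1 = size X by rewrite /X /= size_map.
  apply: (@count_key _ _ _ _ key).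
    rewrite /X /= map_inj_uniq ?fset_uniq ?andbT; last by move=> a b [].
    by apply/negP => /mapP[].
  move=> k; rewrite /X inE => /orP[/eqP ->|/mapP[k' k'S ->]].
    exists (v, w); split; first by rewrite memL /= vS avw.
      by rewrite /Dn /= wS Dw eqxx.
    by rewrite /key eqxx.
  move: k'S; rewrite in_fsetD1 => /andP[k'r k'S].
  have [Ek|Nk] := eqVneq k' v.
    subst k'; exists (v, u); split; first by rewrite memL /= vS avu.
      by rewrite /Dn /= uS Du eqxx.
    by rewrite /key xpair_eqE eqxx /= (negbTE uw).
  have [x [xS a E]] := D_par rS conn k'S k'r.
  exists (k', x); split; first by rewrite memL /= k'S adj_sym a.
    by rewrite /Dn /= xS E eqxx.
  by rewrite /key xpair_eqE (negbTE Nk).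
lia'.
Qed.

End EoLow.

Lemma ivt (f : cell -> int) x s t :
  (forall a b, adj a b -> (f b <= f a + 1)%R) -> path adj x s ->
  (f x <= t <= f (last x s))%R -> exists2 z, z \in x :: s & f z = t.
Proof.
move=> Lf; elim: s x => [|y s IH] x /=.
  by move=> _ H; exists x; rewrite ?inE //; apply/eqP; rewrite eq_le.
case/andP=> axy ps /andP[h1 h2].
have [E|NE] := eqVneq (f x) t; first by exists x => //; exact: mem_head.
have h3 : (f y <= t)%R.
  have := Lf _ _ axy; have : (f x < t)%R by rewrite lt_def eq_sym NE h1.
  move=> a b; lia.
have [E|NE'] := eqVneq (f y) t; first by exists y => //; rewrite inE mem_head orbT.
have [z zi zE] := IH y ps (introT andP (conj h3 h2)).
by exists z => //; rewrite inE zi orbT.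
Qed.

Lemma ivt2 (f : cell -> int) x s t :
  (forall a b, adj a b -> (f b <= f a + 1)%R) -> path adj x s ->
  (f x <= t <= f (last x s))%R \/ (f (last x s) <= t <= f x)%R ->
  exists2 z, z \in x :: s & f z = t.
Proof.
move=> Lf ps [H|H]; first exact: ivt.
have Lf' : forall a b, adj a b -> ((fun z => - f z) b <= (fun z => - f z) a + 1)%R.
  by move=> a b ab /=; have := Lf _ _ (etrans (adj_sym _ _) ab); lia.
have [z zi zE] := ivt (t := (- t)%R) Lf' ps ltac:(simpl; lia).
by exists z => //; lia.
Qed.

Lemma adj_fst a b : adj a b -> (b.1 <= a.1 + 1)%R.
Proof. by rewrite adjE /nbrs !inE => /or4P[]/eqP-> /=; lia. Qed.
Lemma adj_snd a b : adj a b -> (b.2 <= a.2 + 1)%R.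
Proof. by rewrite adjE /nbrs !inE => /or4P[]/eqP-> /=; lia. Qed.

Definition rng (lo hi : int) : seq int := [seq (lo + Posz i)%R | i <- iota 0 (absz (hi - lo)).+1].

Lemma mem_rng lo hi t : (lo <= hi)%R -> (t \in rng lo hi) = (lo <= t <= hi)%R.
Proof.
move=> lh; apply/mapP/idP => [[i]|H].
  by rewrite mem_iota add0n => ib ->; apply/andP; split; lia.
exists (absz (t - lo)); first by rewrite mem_iota add0n; apply/andP; split; lia.
lia.
Qed.

Lemma uniq_rng lo hi : uniq (rng lo hi).
Proof. rewrite map_inj_uniq ?iota_uniq // => i j; lia. Qed.

Lemma size_rng lo hi : size (rng lo hi) = (absz (hi - lo)).+1.
Proof. by rewrite size_map size_iota. Qed.

Definition line (d : int * int) (z : cell) : int := if d.1 == 0%R then z.1 else z.2.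

Lemma line_shift d z : d \in dirs -> line d (shift z d) = line d z.
Proof. by case: z => a b; rewrite /dirs /line /shift !inE => /or4P[]/eqP-> /=; lia. Qed.

Lemma inSep (F : {fset cell}) (P : pred cell) z : (z \in [fset w in F | P w]) = (z \in F) && P z.
Proof. by rewrite !inE. Qed.

Lemma two_of_count (T : eqType) (P : pred T) (s : seq T) : uniq s -> (2 <= count P s)%N ->
  exists u w, [/\ u \in s, w \in s, P u, P w & u != w].
Proof.
move=> us c2.
have : has P s by rewrite has_count; lia.
case/hasP => u us' Pu.
have E := perm_to_rem us'; move/permP: (E) => /(_ P) /=; rewrite Pu => Ec.
have : has P (rem u s) by rewrite has_count; lia.
case/hasP => w wr Pw.
exists u, w; split => //; first by move: wr; apply: mem_rem.
by move: wr; rewrite (mem_rem_uniq _ us) inE eq_sym => /andP[].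
Qed.

Section Bside.
Variables (B : {fset cell}) (sB : seq {fset cell}).
Hypothesis polB : polyomino B.
Hypothesis hs : forall H, H \in sB -> is_hole B H.
Hypothesis us : uniq sB.

Definition F := B `|` HU sB.

Lemma inF_B z : z \in B -> z \in F.
Proof. by rewrite in_fsetU => ->. Qed.

Lemma inF_H H z : H \in sB -> z \in H -> z \in F.
Proof. by move=> Hs zH; rewrite in_fsetU memHU; apply/orP; right; apply/hasP; exists H. Qed.

Lemma F_closure z z' : z \in F -> adj z z' -> z' \notin F -> z \in B.
Proof.
rewrite in_fsetU memHU => /orP[//|/hasP[H Hs zH]] a z'F.
have z'B : z' \notin B by apply: contra z'F; exact: inF_B.
by have := hole_closed (hs Hs) zH a z'B => /(inF_H Hs); rewrite (negbTE z'F).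
Qed.

Lemma card_F : (#|` B| + size sB <= #|` F|)%N.
Proof.
have E0 : B `&` HU sB = fset0.
  apply/fsetP => z; rewrite in_fsetI in_fset0 memHU; apply/negbTE/negP => /andP[zB /hasP[H Hs zH]].
  by have := hole_notin (hs Hs) zH; rewrite zB.
have := cardfsUI B (HU sB); rewrite E0 cardfs0 addn0 -/F => E.
rewrite E leq_add2l; exact: card_HU_ge hs us.
Qed.

Variables x0 x1 y0 y1 : int.
Hypothesis inbox : forall z, z \in F -> (x0 <= z.1 <= x1)%R && (y0 <= z.2 <= y1)%R.
Hypothesis att : [/\ exists2 z, z \in F & z.1 = x0, exists2 z, z \in F & z.1 = x1,
                    exists2 z, z \in F & z.2 = y0 & exists2 z, z \in F & z.2 = y1].

Lemma out_left z : (z.1 < x0)%R \/ (x1 < z.1)%R \/ (z.2 < y0)%R \/ (y1 < z.2)%R -> z \notin F.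
Proof. move=> H; apply/negP => /inbox; case: z H => a b /= H /andP[/andP[h1 h2] /andP[h3 h4]]; lia. Qed.

Lemma attB1 : exists2 z, z \in B & z.1 = x0.
Proof.
case: att => [[[a b] zF /= zE] _ _ _]; exists (a, b) => //; apply: (F_closure (z' := (a - 1, b)%R)) => //.
  by rewrite adjE /nbrs !inE eqxx ?orbT.
by apply: out_left; left => /=; lia.
Qed.
Lemma attB2 : exists2 z, z \in B & z.1 = x1.
Proof.
case: att => [_ [[a b] zF /= zE] _ _]; exists (a, b) => //; apply: (F_closure (z' := (a + 1, b)%R)) => //.
  by rewrite adjE /nbrs !inE eqxx ?orbT.
by apply: out_left; right; left => /=; lia.
Qed.
Lemma attB3 : exists2 z, z \in B & z.2 = y0.
Proof.
case: att => [_ _ [[a b] zF /= zE] _]; exists (a, b) => //; apply: (F_closure (z' := (a, b - 1)%R)) => //.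
  by rewrite adjE /nbrs !inE eqxx ?orbT.
by apply: out_left; right; right; left => /=; lia.
Qed.
Lemma attB4 : exists2 z, z \in B & z.2 = y1.
Proof.
case: att => [_ _ _ [[a b] zF /= zE]]; exists (a, b) => //; apply: (F_closure (z' := (a, b + 1)%R)) => //.
  by rewrite adjE /nbrs !inE eqxx ?orbT.
by apply: out_left; right; right; right => /=; lia.
Qed.

Lemma occ1 t : (x0 <= t <= x1)%R -> exists2 z, z \in B & z.1 = t.
Proof.
move=> ht; case: attB1 => a aB aE; case: attB2 => b bB bE.
case: polB => _ /(_ a b aB bB) [s [ps ls Ps]].
have H : (fst a <= t <= fst (last a s))%R by rewrite ls aE bE.
have [z zi zE] := ivt2 (f := fst) adj_fst ps (or_introl H).
by exists z => //; exact: Ps.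
Qed.

Lemma occ2 t : (y0 <= t <= y1)%R -> exists2 z, z \in B & z.2 = t.
Proof.
move=> ht; case: attB3 => a aB aE; case: attB4 => b bB bE.
case: polB => _ /(_ a b aB bB) [s [ps ls Ps]].
have H : (snd a <= t <= snd (last a s))%R by rewrite ls aE bE.
have [z zi zE] := ivt2 (f := snd) adj_snd ps (or_introl H).
by exists z => //; exact: Ps.
Qed.

Lemma x01 : (x0 <= x1)%R.
Proof. case: att => [[z zF zE] _ _ _]; have /andP[/andP[h1 h2] _] := inbox zF; rewrite -zE; exact: h2. Qed.
Lemma y01 : (y0 <= y1)%R.
Proof. case: att => [_ _ [z zF zE] _]; have /andP[_ /andP[h1 h2]] := inbox zF; rewrite -zE; exact: h2. Qed.

Definition rngd (d : int * int) := if d.1 == 0%R then rng x0 x1 else rng y0 y1.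
Definition Xo := [seq (d, t) | d <- dirs, t <- rngd d].
Definition keyo (p : cell * cell) :=
  let d := (p.2.1 - p.1.1, p.2.2 - p.1.2)%R in (d, line d p.1).

Lemma size_Xo : size Xo = (2 * (absz (x1 - x0)).+1 + 2 * (absz (y1 - y0)).+1)%N.
Proof. rewrite /Xo size_allpairs_dep /rngd /dirs /= !size_map !size_iota; lia. Qed.

Lemma uniq_Xo : uniq Xo.
Proof.
apply: allpairs_uniq_dep => //; first by move=> d _; rewrite /rngd; case: ifP => _; exact: uniq_rng.
by move=> [d1 t1] [d2 t2] _ _ /= [E1 E2]; subst d2; rewrite E2.
Qed.

Lemma count_out : (2 * (absz (x1 - x0)).+1 + 2 * (absz (y1 - y0)).+1 <=
                   count (fun p => p.2 \notin F) (L B))%N.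
Proof.
rewrite -size_Xo; apply: (count_key (key := keyo)); first exact: uniq_Xo.
move=> k /allpairsPdep [d [t [dD tR ->]]].
have [z0 z0B z0E] : exists2 z0, z0 \in B & line d z0 = t.
  move: tR; rewrite /rngd /line; case: ifP => _.
    by rewrite mem_rng ?x01 // => /occ1.
  by rewrite mem_rng ?y01 // => /occ2.
pose G := [fset z in F | line d z == t].
have Gn : G != fset0 by apply/fset0Pn; exists z0; rewrite inSep inF_B // z0E eqxx.
have [zs zsG zmax] := exists_max (dot d) Gn.
move: zsG; rewrite inSep => /andP[zsF /eqP zsl].
have xF : shift zs d \notin F.
  apply/negP => xF; have := zmax (shift zs d); rewrite inSep xF line_shift // zsl eqxx.
  by rewrite shift_dot // => /(_ isT); lia.
have zsB : zs \in B by apply: F_closure zsF _ xF; rewrite adjE shift_nbrs.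
exists (zs, shift zs d); split => //.
  by rewrite memL /= zsB adjE shift_nbrs.
by rewrite /keyo /= shift_diff zsl.
Qed.

Lemma count_hole : (4 * size sB <= count (fun p => p.2 \in HU sB) (L B))%N.
Proof.
have -> : (4 * size sB = size [seq (H, d) | H <- sB, d <- dirs])%N by rewrite size_allpairs mulnC.
apply: (count_key (key := fun p : cell * cell => (holeof sB p.2, (p.1.1 - p.2.1, p.1.2 - p.2.2)%R))).
  by apply: allpairs_uniq => // [[H1 d1] [H2 d2]] _ _ /= [-> ->].
move=> k /allpairsP [[H d] [Hs dD ->]] /=.
have hH := hs Hs; case: (hH) => x0' xH _.
have Hn : H != fset0 by apply/fset0Pn; exists x0'.
have [z zH zmax] := exists_max (dot d) Hn.
have xH' : shift z d \notin H.
  by apply/negP => /zmax; rewrite shift_dot //; lia.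
have xB : shift z d \in B.
  case: (boolP (shift z d \in B)) => // xB; exfalso.
  by move/negP: xH'; apply; apply: hole_closed hH zH _ xB; rewrite adjE shift_nbrs.
exists (shift z d, z); split => /=.
- by rewrite memL /= xB adj_sym adjE shift_nbrs.
- by rewrite memHU; apply/hasP; exists H.
- by rewrite (holeofE hs Hs zH) shift_diff.
Qed.

Lemma decompB : (Eo B + count (fun p => p.2 \notin F) (L B) + count (fun p => p.2 \in HU sB) (L B)
                 <= 4 * #|` B|)%N.
Proof.
rewrite -[X in (_ <= X)%N](sizeL (enum_fset B)); apply: count3.
- by move=> p; apply/negP => /andP[/inF_B ->].
- move=> p; apply/negP => /andP[pB]; rewrite memHU => /hasP[H Hs pH].
  by have := hole_notin (hs Hs) pH; rewrite pB.
- move=> p; apply/negP => /andP[/negP pF]; rewrite memHU => /hasP[H Hs pH].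
  by apply: pF; exact: inF_H Hs pH.
Qed.

Definition boxs := [seq (a, b) | a <- rng x0 x1, b <- rng y0 y1].

Lemma F_boxs z : z \in F -> z \in boxs.
Proof.
case: z => a b zF; have := inbox zF => /andP[/andP[h1 h2] /andP[h3 h4]].
by apply: allpairs_f; rewrite mem_rng ?x01 ?y01 //= ?h1 ?h2 ?h3 ?h4.
Qed.

Lemma card_F_box : (#|` F| <= (absz (x1 - x0)).+1 * (absz (y1 - y0)).+1)%N.
Proof.
have <- : size boxs = ((absz (x1 - x0)).+1 * (absz (y1 - y0)).+1)%N by rewrite size_allpairs !size_rng.
apply: uniq_leq_size; first exact: fset_uniq.
exact: F_boxs.
Qed.

Lemma full_box : ((absz (x1 - x0)).+1 * (absz (y1 - y0)).+1 <= #|` F|)%N ->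
  forall a b, (x0 <= a <= x1)%R -> (y0 <= b <= y1)%R -> (a, b) \in F.
Proof.
move=> le a b ha hb; case: (boolP ((a, b) \in F)) => // nF; exfalso.
have ub : uniq boxs by apply: allpairs_uniq; rewrite ?uniq_rng // => [[? ?] [? ?]] _ _ /= [-> ->].
have inb : (a, b) \in boxs by apply: allpairs_f; rewrite mem_rng ?x01 ?y01.
have : (#|` F| <= size (rem (a, b) boxs))%N.
  apply: uniq_leq_size; first exact: fset_uniq.
  move=> z zF; rewrite (mem_rem_uniq _ ub) inE F_boxs // andbT.
  by apply/eqP => E; move: nF; rewrite -E zF.
rewrite size_rem // size_allpairs !size_rng; lia.
Qed.

Lemma hole_nbr_F H z z' : H \in sB -> z \in H -> adj z z' -> z' \in F.
Proof.
move=> Hs zH a; case: (boolP (z' \in B)) => [/inF_B //|nB].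
exact: inF_H Hs (hole_closed (hs Hs) zH a nB).
Qed.

Hypothesis hpos : (0 < size sB)%N.

Lemma box_wide : (x0 < x1)%R /\ (y0 < y1)%R.
Proof.
case: sB hpos hs (@inF_H) (@hole_nbr_F) => // H s _ hs' _ hnF.
have Hs : H \in H :: s by exact: mem_head.
case: (hs' H Hs) => [[a b] zH _].
have n1 := hnF H (a, b) (a + 1, b)%R Hs zH ltac:(by rewrite adjE /nbrs !inE eqxx).
have n2 := hnF H (a, b) (a - 1, b)%R Hs zH ltac:(by rewrite adjE /nbrs !inE eqxx ?orbT).
have n3 := hnF H (a, b) (a, b + 1)%R Hs zH ltac:(by rewrite adjE /nbrs !inE eqxx ?orbT).
have n4 := hnF H (a, b) (a, b - 1)%R Hs zH ltac:(by rewrite adjE /nbrs !inE eqxx ?orbT).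
move: (inbox n1) (inbox n2) (inbox n3) (inbox n4) => /=; lia.
Qed.

Definition ringb (z : cell) := [&& (x0 <= z.1 <= x1)%R, (y0 <= z.2 <= y1)%R &
   [|| z.1 == x0, z.1 == x1, z.2 == y0 | z.2 == y1]].

Hypothesis full : forall a b, (x0 <= a <= x1)%R -> (y0 <= b <= y1)%R -> (a, b) \in F.

Lemma ring_B z : ringb z -> z \in B.
Proof.
case: z => a b; rewrite /ringb /= => /and3P[ha hb /or4P H].
have aF := full ha hb.
case: H => /eqP E.
- apply: (F_closure (z' := (a - 1, b)%R)) aF _ _; first by rewrite adjE /nbrs !inE eqxx ?orbT.
  by apply: out_left; left => /=; lia.
- apply: (F_closure (z' := (a + 1, b)%R)) aF _ _; first by rewrite adjE /nbrs !inE eqxx ?orbT.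
  by apply: out_left; right; left => /=; lia.
- apply: (F_closure (z' := (a, b - 1)%R)) aF _ _; first by rewrite adjE /nbrs !inE eqxx ?orbT.
  by apply: out_left; right; right; left => /=; lia.
- apply: (F_closure (z' := (a, b + 1)%R)) aF _ _; first by rewrite adjE /nbrs !inE eqxx ?orbT.
  by apply: out_left; right; right; right => /=; lia.
Qed.

Lemma ring_two v : ringb v -> (2 <= count ringb (nbrs v))%N.
Proof.
have [w1 w2] := box_wide.
case: v => a b; rewrite /ringb /nbrs /= addn0; lia.
Qed.

Lemma Eo_full : (#|` B| + #|` B| <= Eo B + 1)%N.
Proof.
case: polB => Bn conn.
case/fset0Pn: (Bn) => r rB.
pose R := [fset z in B | ringb z].
apply: (Eo_ring rB conn (R := R)).
- by move=> z; rewrite inSep => /andP[].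
- have [w1 w2] := box_wide.
  apply/fset0Pn; exists (x0, y0); rewrite inSep ring_B /ringb /= ?eqxx //; lia.
- move=> v; rewrite inSep => /andP[vB rv].
  have [u [w [un wn ru rw uw]]] := two_of_count (nbrs_uniq v) (ring_two rv).
  exists u, w; split => //; rewrite ?inSep ?ring_B ?ru ?rw ?adjE //.
Qed.

End Bside.

Section Leaf.
Variable A : {fset cell}.
Hypothesis acA : acyclic A.

Lemma cycle_of (x w : cell) p p1 p2 : path adj x p -> uniq (x :: p) -> {subset x :: p <= A} ->
  x :: p = p1 ++ w :: p2 -> adj (last x p) w -> (size p2 <= 1)%N.
Proof.
move=> ps up sA E a.
have lE : last x p = last w p2 by rewrite -[last x p]/(last x (x :: p)) ?E last_cat /=; case: (x :: p) E => //.
rewrite leqNgt; apply/negP => sz; apply: acA.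
exists (w :: p2); split => //.
- by have := up; rewrite E cat_uniq => /and3P[_ _].
- apply/allP => z zi; apply: sA; rewrite E mem_cat zi orbT //.
- rewrite /= rcons_path -lE a andbT.
  have : path adj x p by [].
  case: p1 E => [|y p1] /= [-> ->] //.
  by rewrite cat_path => /andP[_ /= /andP[_ ->]].
Qed.
Lemma split_ex (T : eqType) (w : T) s : w \in s -> exists p1 p2, s = p1 ++ w :: p2.
Proof. by case/splitPr => p1 p2; exists p1, p2. Qed.

Lemma last_split (x w : cell) p p1 p2 : x :: p = p1 ++ w :: p2 -> last x p = last w p2.
Proof. by move=> E; rewrite -[last x p]/(last x (x :: p)) ?E last_cat /=; case: (x :: p) E. Qed.

Lemma leaf_core (S : {fset cell}) x p : {subset S <= A} -> path adj x p -> uniq (x :: p) ->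
  {subset x :: p <= S} ->
  (forall w, w \in S -> w \in nbrs (last x p) -> w \notin x :: p ->
       exists2 v, v \in S & (count (mem S) (nbrs v) <= 1)%N) ->
  exists2 v, v \in S & (count (mem S) (nbrs v) <= 1)%N.
Proof.
move=> SA ps up sp ext.
set v := last x p; have vS : v \in S by apply: sp; exact: mem_last.
case: (leqP (count (mem S) (nbrs v)) 1) => [le|gt]; first by exists v.
have [w1 [w2 [w1n w2n w1S w2S w12]]] := two_of_count (nbrs_uniq v) gt.
case: (boolP (w1 \in x :: p)) => [w1p|w1p]; last exact: ext w1 w1S w1n w1p.
case: (boolP (w2 \in x :: p)) => [w2p|w2p]; last exact: ext w2 w2S w2n w2p.
exfalso.
have [p1 [p2 E1]] := split_ex w1p; have [q1 [q2 E2]] := split_ex w2p.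
have sA : {subset x :: p <= A} by move=> z /sp /SA.
have c1 := cycle_of ps up sA E1 ltac:(by rewrite adjE).
have c2 := cycle_of ps up sA E2 ltac:(by rewrite adjE).
have l1 := last_split E1; have l2 := last_split E2.
case: p2 E1 c1 l1 => [|y1 [|? ?]] E1 c1 l1 //.
  by move: w1n; rewrite -adjE /v l1 /= adj_irr.
case: q2 E2 c2 l2 => [|y2 [|? ?]] E2 c2 l2 //.
  by move: w2n; rewrite -adjE /v l2 /= adj_irr.
have := congr1 rev (etrans (esym E1) E2); rewrite !rev_cat !rev_cons /= => [[_ E]].
by move: w12; rewrite E eqxx.
Qed.

Lemma leaf (S : {fset cell}) : {subset S <= A} -> S != fset0 ->
  exists2 v, v \in S & (count (mem S) (nbrs v) <= 1)%N.
Proof.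
move=> SA /fset0Pn [x0 x0S].
suff : forall n x p, (#|` S| - size p <= n)%N -> path adj x p -> uniq (x :: p) ->
   {subset x :: p <= S} -> exists2 v, v \in S & (count (mem S) (nbrs v) <= 1)%N.
  by move/(_ #|` S| x0 [::]); apply => //; [rewrite subn0 | move=> z; rewrite inE => /eqP ->].
elim=> [|n IH] x p hn ps up sp; apply: (leaf_core SA ps up sp) => w wS wn wp.
all: have szS : (size (w :: x :: p) <= #|` S|)%N
       by apply: uniq_leq_size; [by rewrite /= wp; exact: up | move=> z; rewrite inE => /orP[/eqP ->|/sp]].
  by exfalso; move: hn; rewrite leqn0 subn_eq0 => /(leq_trans szS) /= /ltnW; rewrite ltnn.
apply: (IH x (rcons p w)).
- by move: hn szS; rewrite size_rcons /=; lia.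
- by rewrite rcons_path ps /= adjE.
- by rewrite -rcons_cons rcons_uniq wp; exact: up.
- by move=> z; rewrite -rcons_cons mem_rcons inE => /orP[/eqP ->|/sp].
Qed.

Lemma count_snd_eq (s : seq cell) v : uniq s ->
  (count (fun p : cell * cell => p.2 == v) (L s) <= count (mem s) (nbrs v))%N.
Proof.
move=> us; rewrite -size_filter -[X in (_ <= X)%N]size_filter.
set f := filter _ (L s).
have uf : uniq (map fst f).
  rewrite map_inj_in_uniq ?filter_uniq ?uniqL //.
  by move=> [a b] [c d]; rewrite !mem_filter /= => /andP[/eqP -> _] /andP[/eqP -> _] ->.
rewrite -(size_map fst); apply: uniq_leq_size => [//|a /mapP[[a' b'] pf ->]].
move: pf; rewrite /f !mem_filter memL /= => /andP[/eqP -> /andP[a's aa]].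
by rewrite a's -adjE adj_sym.
Qed.

Lemma Eo_acyc n (S : {fset cell}) : #|` S| = n -> {subset S <= A} -> S != fset0 ->
  (Eo S + 2 <= 2 * #|` S|)%N.
Proof.
elim: n S => [|n IH] S cs SA Sn; first by move: Sn; rewrite -cardfs_gt0 cs.
have [v vS dv] := leaf SA Sn.
set S' := S `\ v.
have pe : perm_eq (enum_fset S) (v :: enum_fset S').
  apply: uniq_perm; first exact: fset_uniq.
    by rewrite /= fset_uniq andbT in_fsetD1 eqxx.
  by move=> z; rewrite in_cons in_fsetD1; case: eqVneq => [->|]; rewrite ?vS.
have E1 : Eo S = (count (mem S) (nbrs v) + count (fun p : cell * cell => p.2 \in S) (L (enum_fset S')))%N.
  rewrite /Eo (permP (@perm_allpairs_dep _ (fun _ => cell) _ (fun x y => (x, y)) _ nbrs _ nbrs pe (fun x _ => perm_refl (nbrs x)))).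
  have -> : [seq (x, y) | x <- v :: enum_fset S', y <- nbrs x] = [seq (v, y) | y <- nbrs v] ++ L (enum_fset S') by [].
  by rewrite count_cat count_map.
have E2 : (count (fun p : cell * cell => p.2 \in S) (L (enum_fset S')) <=
           Eo S' + count (fun p : cell * cell => p.2 == v) (L (enum_fset S')))%N.
  apply: count_sub2 => p _; rewrite in_fsetD1 orbC.
  by case: eqVneq => //= _ ->.
have E3 := count_snd_eq v (fset_uniq S').
have E4 : (count (mem (enum_fset S')) (nbrs v) <= count (mem S) (nbrs v))%N.
  by apply: sub_count => z /=; rewrite in_fsetD1 => /andP[].
have cS : #|` S| = (#|` S'|).+1 by rewrite (cardfsD1 v S) vS.
case: (eqVneq S' fset0) => [S0|S'n].
  have d0 : count (mem S) (nbrs v) = 0%N.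
    apply/eqP; rewrite -leqn0 leqNgt -has_count; apply/hasP => [[y yn yS]].
    have : y \in S' by rewrite in_fsetD1 (yS : y \in S) andbT; apply: contraTneq yn => ->; rewrite -adjE adj_irr.
    by rewrite S0 in_fset0.
  have e0 : Eo S' = 0%N by rewrite S0.
  have c0 : #|` S'| = 0%N by rewrite S0 cardfs0.
  by rewrite E1 d0 cS c0 S0.
have IH' := IH S' ltac:(by move: cs; rewrite cS => -[]) (fun z zS' => SA z (fsubsetP (fsubD1set S v) z zS')) S'n.
have h := leq_trans E2 (leq_add (leqnn (Eo S')) (leq_trans E3 (leq_trans E4 dv))).
rewrite E1 cS; apply: (leq_trans (leq_add (leq_add dv h) (leqnn 2))).
move: IH'; clear; lia.
Qed.

End Leaf.

Lemma c_spec m : (4 * m <= ceil_2sqrt m * ceil_2sqrt m)%N /\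
  forall k, (4 * m <= k * k)%N -> (ceil_2sqrt m <= k)%N.
Proof.
rewrite /ceil_2sqrt; set P := fun k => (4 * m <= k * k)%N.
set s := iota 0 (2 * m + 2).
have hs : has P s by apply/hasP; exists (2 * m + 1)%N; rewrite ?mem_iota /P; lia.
have lt : (find P s < size s)%N by rewrite -has_find.
split.
  by have := nth_find 0%N hs; rewrite nth_iota ?add0n // -(size_iota 0 (2 * m + 2)).
move=> k Pk; rewrite leqNgt; apply/negP => kl.
have ks : (k < 2 * m + 2)%N by move: lt; rewrite size_iota; lia.
by have := before_find 0%N kl; rewrite nth_iota // add0n /P Pk.
Qed.

Lemma c_lip j t : (1 <= j)%N -> (ceil_2sqrt (j + t) <= ceil_2sqrt j + t)%N.
Proof.
move=> j1; have [h1 _] := c_spec j; have [_ h2] := c_spec (j + t).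
apply: h2; set c := ceil_2sqrt j in h1 *.
have c2 : (2 <= c)%N by nia.
nia.
Qed.

Lemma count_snd_le (S Y : {fset cell}) :
  (count (fun p : cell * cell => p.2 \in Y) (L (enum_fset S)) <= 4 * #|` Y|)%N.
Proof.
rewrite -size_filter -(sizeL (enum_fset Y)) -(size_map (fun p : cell * cell => (p.2, p.1))).
apply: uniq_leq_size.
  rewrite map_inj_in_uniq ?filter_uniq ?uniqL ?fset_uniq //.
  by move=> [a b] [c d] _ _ /= [-> ->].
move=> q /mapP[[a b] pf ->]; move: pf; rewrite mem_filter memL /= => /andP[bY /andP[aS ab]].
by rewrite memL /= bY adj_sym.
Qed.

Definition boxN (N : nat) := [seq (a, b) | a <- rng (- Posz N) (Posz N), b <- rng (- Posz N) (Posz N)]%R.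

Section Aside.
Variables (A : {fset cell}) (sA : seq {fset cell}).
Hypothesis hA : forall H, H \in sA <-> is_hole A H.

Lemma outer_or_hole y : y \notin A -> outer_cell A y \/ y \in HU sA.
Proof.
move=> yA; case: (classic (outer_cell A y)) => [|no]; [by left | right].
have [N bd] : exists N : nat, forall z, creach A y z -> (absz z.1 <= N)%N /\ (absz z.2 <= N)%N.
  by apply: NNPP => nb; apply: no; split.
pose H := seq_fset tt (filter (fun z => pb (creach A y z)) (boxN N)).
have inH : forall z, z \in H <-> creach A y z.
  move=> z; rewrite /H seq_fsetE mem_filter; split => [/andP[/pbP //]|cz].
  apply/andP; split; first exact/pbP.
  case: z cz => a b cz; have [/= b1 b2] := bd _ cz.
  by apply: allpairs_f; rewrite mem_rng; lia.
have hH : is_hole A H.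
  exists y; first by apply/inH; apply: reach_refl.
  by split => // z; split => /inH.
by rewrite memHU; apply/hasP; exists H => //; [apply/hA | apply/inH; apply: reach_refl].
Qed.

Hypothesis unitH : forall H, is_hole A H -> #|` H| = 1%N.
Hypothesis acA : acyclic A.
Hypothesis An : A != fset0.
Variable E : {fset cell * cell}.
Hypothesis hE : forall e, e \in E <-> outer_edge A e.

Lemma A_bound : (#|` A| + #|` A| + 2 <= #|` E| + 4 * size sA)%N.
Proof.
have e1 := Eo_acyc acA (erefl #|` A|) (fun z zA => zA) An.
have e2 : (count (fun p : cell * cell => p.2 \notin A) (L (enum_fset A)) <=
           count (mem E) (L (enum_fset A)) + count (fun p : cell * cell => p.2 \in HU sA) (L (enum_fset A)))%N.
  apply: count_sub2 => p; rewrite memL => /andP[pA pa] pn.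
  case: (outer_or_hole pn) => [o|->]; last by rewrite orbT.
  by apply/orP; left; apply/hE; split.
have e3 := count_mem_fset E (uniqL (fset_uniq A)).
have e4 := count_snd_le A (HU sA).
have e5 : (#|` HU sA| <= size sA)%N.
  apply: leq_trans (card_HU_le sA) _.
  have : forall H, H \in sA -> is_hole A H by move=> H /hA.
  elim: (sA) => //= H s IH hs.
  have := IH (fun H' H's => hs H' (mem_body H H's)).
  rewrite unitH; [lia | exact: hs H (mem_head _ _)].
have e6 := count_predC (fun p : cell * cell => p.2 \in A) (L (enum_fset A)).
rewrite sizeL in e6.
rewrite /Eo in e1.
move: e1 e2 e3 e4 e5 e6; clear.
set a := count (fun p : cell * cell => p.2 \in A) (L (enum_fset A)).
set b := count (fun p : cell * cell => p.2 \notin A) (L (enum_fset A)).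
set c := count (mem E) (L (enum_fset A)).
set d := count (fun p : cell * cell => p.2 \in HU sA) (L (enum_fset A)).
set nA := #|` A|. set nE := #|` E|. set nH := #|` HU sA|.
lia.
Qed.
End Aside.

Lemma amgm (W Hg : nat) : (4 * (W * Hg) <= (W + Hg) * (W + Hg))%N.
Proof.
case: (leqP W Hg) => h.
- have [d ->] : exists d, Hg = (W + d)%N by exists (Hg - W)%N; lia.
  nia.
- have [d ->] : exists d, W = (Hg + d)%N by exists (W - Hg)%N; lia.
  nia.
Qed.

Lemma final_arith (a b h W Hg Fc e : nat) : (1 <= h)%N ->
  (a + a + 2 <= 2 * ceil_2sqrt (a + h) + 4 * h)%N ->
  (e + 2 * W + 2 * Hg + 4 * h <= 4 * b)%N -> (b + b <= e + 2)%N ->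
  (b + h <= Fc)%N -> (Fc <= W * Hg)%N -> ((W * Hg <= Fc)%N -> (b + b <= e + 1)%N) ->
  (a <= b)%N.
Proof.
move=> h1 hA b1 b2 b3 b4 b5; rewrite leqNgt; apply/negP => ba.
have [_ m1] := c_spec (b + h).
have am := amgm W Hg.
have hK : (ceil_2sqrt (b + h) <= W + Hg)%N by apply: m1; lia.
have L1 := @c_lip (b + h) (a - b) ltac:(lia).
have E1 : (b + h + (a - b) = a + h)%N by lia.
rewrite E1 in L1.
case: (leqP (W * Hg) Fc) => [le|gt].
  have := b5 le; lia.
have [_ m2] := c_spec (b + h + 1).
have hK2 : (ceil_2sqrt (b + h + 1) <= W + Hg)%N by apply: m2; lia.
have L2 := @c_lip (b + h + 1) (a - b - 1) ltac:(lia).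
have E2 : (b + h + 1 + (a - b - 1) = a + h)%N by lia.
rewrite E2 in L2.
lia.
Qed.

Lemma B_facts B sB : polyomino B -> (forall H, H \in sB <-> is_hole B H) -> uniq sB ->
  (0 < size sB)%N ->
  exists W Hg Fc e : nat, [/\ (e + 2 * W + 2 * Hg + 4 * size sB <= 4 * #|` B|)%N,
     (#|` B| + #|` B| <= e + 2)%N, (#|` B| + size sB <= Fc)%N, (Fc <= W * Hg)%N &
     ((W * Hg <= Fc)%N -> (#|` B| + #|` B| <= e + 1)%N)].
Proof.
move=> polB hB us hpos.
have hs : forall H, H \in sB -> is_hole B H by move=> H /hB.
have Fn : F B sB != fset0.
  by case: (polB) => /fset0Pn [z zB] _; apply/fset0Pn; exists z; exact: inF_B.
have [zl zlF zlm] := exists_max (fun z : cell => - z.1)%R Fn.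
have [zr zrF zrm] := exists_max (fun z : cell => z.1) Fn.
have [zb zbF zbm] := exists_max (fun z : cell => - z.2)%R Fn.
have [zt ztF ztm] := exists_max (fun z : cell => z.2) Fn.
have inbox : forall z, z \in F B sB -> (zl.1 <= z.1 <= zr.1)%R && (zb.2 <= z.2 <= zt.2)%R.
  move=> z zF; move: (zlm z zF) (zrm z zF) (zbm z zF) (ztm z zF).
  case: z {zF} => p q; case: (zl) => l1 l2; case: (zr) => r1 r2; case: (zb) => b1 b2; case: (zt) => t1 t2 /=.
  lia.
have att : [/\ exists2 z, z \in F B sB & z.1 = zl.1, exists2 z, z \in F B sB & z.1 = zr.1,
              exists2 z, z \in F B sB & z.2 = zb.2 & exists2 z, z \in F B sB & z.2 = zt.2].
  by split; [exists zl | exists zr | exists zb | exists zt].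
have h1 := decompB hs.
have h2 := count_out polB hs us inbox att.
have h3 := count_hole hs us.
case: (polB) => Bn conn; case/fset0Pn: (Bn) => r rB.
have h4 := Eo_conn rB conn.
have h5 := card_F hs us.
have h6 := card_F_box inbox att.
exists (absz (zr.1 - zl.1)).+1, (absz (zt.2 - zb.2)).+1, #|` F B sB|, (Eo B); split => //.
- apply: (leq_trans _ h1); rewrite -!addnA leq_add2l addnA; exact: leq_add h2 h3.
- move=> le; exact: (Eo_full polB hs us inbox hpos (full_box us inbox att le)).
Qed.

Unset Implicit Arguments.

Theorem theorem4 (A : {fset cell}) (h : nat) :
  polyomino A -> num_holes A h -> (1 <= h)%N ->
  efficiently_structured A h -> crystallized A h.
Proof.
move=> polA [sA [usA hA szA]] h1 [acA unitH [E [hE cE]]] B polB [sB [usB hB szB]].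
rewrite /ntiles.
have An : A != fset0 by case: polA.
have hAb := A_bound hA unitH acA An hE.
rewrite cE szA in hAb.
have [W [Hg [Fc [e [b1 b2 b3 b4 b5]]]]] := B_facts polB hB usB ltac:(by rewrite szB).
rewrite szB in b1 b3.
exact: (final_arith h1 hAb b1 b2 b3 b4 b5).
Qed.
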